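(* For every even $n\ge 6$, the honeycomb toroidal graph $\mathrm{HTG}(1,n,3)$ is even pancyclic, i.e. it contains a cycle of length $L$ for every even $L$ with $4\le L\le n$.
   Context: For $m=1$, even $n\ge 6$ and odd $\ell$ with $\ell\not\equiv\pm1\pmod n$, the honeycomb toroidal graph $\mathrm{HTG}(1,n,\ell)$ has vertex set $\{u_j: j\in\mathbb{Z}_n\}$ and edges $u_ju_{j+1}$ for all $j$ (vertical edges) and $u_ju_{j+\ell}$ for all odd $j$ (jump edges), subscripts modulo $n$. *)

(* Defs.v *)
From mathcomp Require Import all_boot.
From mathcomp Require Import fintype.
Set Implicit Arguments. Unset Strict Implicit. Unset Printing Implicit Defensive.

(* Honeycomb toroidal graph HTG(1,n,l): vertices u_j, j in Z_n, represented
   by 'I_n.  Edges u_j u_{j+1} (vertical) for all j, and u_j u_{j+l}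
   (jump edges) for all odd j; subscripts modulo n. *)
Definition htg_edge (n l : nat) (x y : 'I_n) : bool :=
  (nat_of_ord y == ((nat_of_ord x).+1 %% n)%N) || ((odd (nat_of_ord x)) && (nat_of_ord y == ((nat_of_ord x + l)%N %% n)%N)).

Definition htg_adj (n l : nat) : rel 'I_n :=
  fun x y => @htg_edge n l x y || @htg_edge n l y x.

Definition has_cycle_of_length (n : nat) (adj : rel 'I_n) (L : nat) : Prop :=
  exists s : seq 'I_n, [/\ size s = L, 3 <= L, uniq s & cycle adj s].
Arguments htg_edge : clear implicits.
Arguments htg_adj : clear implicits.
Arguments has_cycle_of_length : clear implicits.

(* Main.v *)
Require Import Defs.
From mathcomp Require Import all_boot.
From mathcomp Require Import zify.

Section H.
Variable n' : nat.
Local Notation n := n'.+1.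

Definition vtx (a : nat) : 'I_n := Ordinal (ltn_pmod a (ltn0Sn n')).
Definition A : rel nat := relpre vtx (htg_adj n 3).

Lemma A_sym a b : A a b = A b a.
Proof. by rewrite /A /= /htg_adj orbC. Qed.

Lemma A_step a : A a a.+1.
Proof.
rewrite /A /= /htg_adj /htg_edge /=.
apply/orP; left; apply/orP; left; apply/eqP.
by rewrite -addn1 -modnDml addn1.
Qed.

Lemma A_jump a : odd a -> a < n -> A a (a + 3).
Proof.
move=> Ho Hlt.
rewrite /A /= /htg_adj /htg_edge /=.
have Ha : a %% n = a by apply: modn_small; lia.
rewrite Ha Ho /=.
apply/orP; left; apply/orP; right; by rewrite eqxx.
Qed.

Lemma uniq_mid (a b : seq nat) x : uniq (a ++ x :: b) = (x \notin a ++ b) && uniq (a ++ b).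
Proof. by rewrite -cat1s uniq_catCA. Qed.

Definition J k := exists p q : seq nat, exists x y,
  [/\ path A 1 p, last 1 p = x, A x y, path A y q & last y q = 2] /\
  [/\ x + y = 4*k-1, 2*k-1 <= x <= 2*k, 2*k-1 <= y <= 2*k /\
      uniq (1 :: p ++ y :: q), all (fun a => 1 <= a <= 2*k) (1 :: p ++ y :: q)
      & size (1 :: p ++ y :: q) = 2*k].

Lemma J2 : 5 <= n -> J 2.
Proof.
move=> Hn.
exists [:: 4], [:: 2], 4, 3.
split; split => //=.
- rewrite andbT. apply: (@A_jump 1) => //; lia.
- by rewrite A_sym (A_step 3).
- by rewrite andbT A_sym (A_step 2).
Qed.

Lemma Jstep k : 2 <= k -> 2*k + 2 <= n -> J k -> J k.+1.
Proof.
move=> Hk Hkn [p [q [x [y [[Hp Hl Hxy Hq Hlq] [Hs Hx [Hy Hu] Ha Hsz]]]]]].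
have Hnew : forall z, 2*k < z -> z \notin (1 :: p ++ y :: q).
  move=> z Hz; apply/negP => Hin.
  by move/allP: Ha => /(_ z Hin); lia.
have common : forall x' y', 2*k < x' -> 2*k < y' -> x' != y' ->
   A x x' -> A y' y -> A x' y' -> x' + y' = 4 * k.+1 - 1 ->
   2*k.+1 - 1 <= x' <= 2 * k.+1 -> 2*k.+1 - 1 <= y' <= 2 * k.+1 -> J k.+1.
  move=> x' y' H1 H2 H3 H4 H5 H9 H6 H7 H8.
  exists (rcons p x'), (y :: q), x', y'; split; split => //.
  - by rewrite rcons_path Hp Hl H4.
  - by rewrite last_rcons.
  - by rewrite /= H5 Hq.
  - split => //.
    have -> : 1 :: rcons p x' ++ [:: y', y & q] = (1 :: p) ++ x' :: y' :: y :: q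
      by rewrite -cats1 -catA.
    rewrite uniq_mid -[(1 :: p) ++ y' :: y :: q]/((1 :: p) ++ y' :: (y :: q)) uniq_mid.
    rewrite [(1 :: p) ++ y :: q]/= Hu andbT.
    rewrite mem_cat in_cons negb_or.
    move: (Hnew x' H1) (Hnew y' H2) => /= Hx1 Hy1.
    rewrite -[1 :: p ++ y :: q]/((1 :: p) ++ y :: q) in Hx1.
    rewrite mem_cat negb_or in Hx1.
    move/andP: Hx1 => [Hx1 Hx2]; rewrite Hy1 andbT.
    move: Hx1; rewrite in_cons => ->; rewrite /=.
    rewrite in_cons negb_or Hx2 andbT.
    by rewrite H3.
  - move: Ha; rewrite -cats1 -catA /= !all_cat /= => /and4P [h1 h2 h3 h4].
    apply/and5P; split; try lia.
    + apply/allP => z /(allP h2); lia.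
    + apply/allP => z /(allP h4); lia.
  - move: Hsz; rewrite /= !size_cat /= size_rcons; lia.
have [Ex|Ex] : x = 2*k-1 \/ x = 2*k by lia.
- have Ey : y = 2*k by lia.
  apply: (common (2*k+2) (2*k+1)); try lia.
  + have -> : 2*k+2 = x + 3 by lia.
    apply: A_jump; last lia.
    have -> : x = (2*(k-1)).+1 by lia.
    by rewrite /= oddM.
  + rewrite Ey A_sym addn1. exact: (A_step (2*k)).
  + rewrite A_sym; have -> : 2*k+2 = (2*k+1).+1 by lia.
    exact: A_step.
- have Ey : y = 2*k - 1 by lia.
  apply: (common (2*k+1) (2*k+2)); try lia.
  + by rewrite Ex addn1; exact: A_step.
  + rewrite A_sym.
    have -> : 2*k+2 = y + 3 by lia.
    apply: A_jump; last lia.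
    have -> : y = (2*(k-1)).+1 by lia.
    by rewrite /= oddM.
  + have -> : 2*k+2 = (2*k+1).+1 by lia.
    exact: A_step.
Qed.

Lemma Jall k : 5 <= n -> 2 <= k -> 2*k <= n -> J k.
Proof.
move=> H5.
elim: k => [|k IH] // Hk Hkn.
have [->|Hk2] : k.+1 = 2 \/ 2 <= k by lia.
- apply: J2; lia.
- apply: Jstep => //; try lia. apply: IH; lia.
Qed.

End H.

Lemma mod_inj (m a b : nat) : 0 < a <= m -> 0 < b <= m -> a %% m = b %% m -> a = b.
Proof.
move=> /andP [a1 a2] /andP [b1 b2].
have [Ea|Ea] : a = m \/ a < m by lia.
- have [Eb|Eb] : b = m \/ b < m by lia.
  + by rewrite Ea Eb.
  + by rewrite Ea modnn modn_small // => H; lia.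
- have [Eb|Eb] : b = m \/ b < m by lia.
  + by rewrite Eb modnn modn_small // => H; lia.
  + by rewrite !modn_small.
Qed.


Theorem mainTheorem10 (n : nat) :
  ~~ odd n -> 6 <= n ->
  forall L : nat, ~~ odd L -> 4 <= L -> L <= n ->
    has_cycle_of_length n (htg_adj n 3) L.
Proof.
case: n => [|n'] // Hne Hn L HL HL4 HLn.
set k := L./2.
have HLk : L = 2 * k by rewrite /k -{1}(odd_double_half L) (negbTE HL) add0n -mul2n.
have [p [q [x [y [[Hp Hl Hxy Hq Hlq] [Hs Hx [Hy Hu] Ha Hsz]]]]]] :=
  @Jall n' k ltac:(lia) ltac:(lia) ltac:(lia).
exists (map (vtx n') (1 :: p ++ y :: q)); split.
- by rewrite size_map Hsz.
- lia.
- rewrite map_inj_in_uniq //.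
  move=> a b /(allP Ha) Ha' /(allP Ha) Hb' /(congr1 val) /= Hab.
  have : a %% n'.+1 = b %% n'.+1 by [].
  case/andP: Ha' => Ha1 Ha2; case/andP: Hb' => Hb1 Hb2.
  move=> E. apply: (@mod_inj n'.+1) => //; lia.
- rewrite cycle_map /= rcons_cat rcons_cons.
  rewrite -/(A n') cat_path Hp Hl /=.
  rewrite Hxy /= rcons_path Hq Hlq /=.
  by rewrite A_sym A_step.
Qed.
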